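(* Let $C\subset\mathbb{R}^d$ be a smooth centrally symmetric convex body and let $(G,p)$ be a framework in $\mathbb{R}^d$ that is regular with respect to $\|\cdot\|_C$. Then $(G,p)$ is constant with respect to $\|\cdot\|_C$.
   Context: A centrally symmetric convex body $C$ (compact, convex, non-empty interior, $C=-C$) defines the norm $\|x\|_C=\inf\{\lambda>0:x\in\lambda C\}$; $C$ is smooth if every boundary point has a unique supporting hyperplane. A framework $(G,p)$ is a finite simple graph $G=(V,E)$ with $p=(p_v)_{v\in V}\in\mathbb{R}^{d|V|}$. It is well-positioned if $p_v\ne p_w$ for all $vw\in E$ and $f_{G,C}:q\mapsto(\tfrac12\|q_v-q_w\|_C^2)_{vw\in E}$ is differentiable at $p$; then the rigidity matrix $R_C(G,p)$ is the derivative of $f_{G,C}$ at $p$ (row $vw$ has $\varphi_C(p_v-p_w)$ in the $v$ columns, $\varphi_C(p_w-p_v)$ in the $w$ columns, zeros elsewhere, where $\varphi_C(x)$ is the derivative of $\tfrac12\|\cdot\|_C^2$ at $x$). $(G,p)$ is regular if it is well-positioned and $\operatorname{rank}R_C(G,p)\ge\operatorname{rank}R_C(G,q)$ for every well-positioned placement $q$ of $G$. $(G,p)$ is constant if there is a neighbourhood $U$ of $p$ in $\mathbb{R}^{d|V|}$ such that every $q\in U$ gives a well-positioned $(G,q)$ with $\operatorname{rank}R_C(G,q)=\operatorname{rank}R_C(G,p)$. *)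

(* Defs.v *)
From HB Require Import structures.
From mathcomp Require Import all_boot all_order all_algebra.
From mathcomp Require Import all_classical all_reals all_analysis.
Set Implicit Arguments. Unset Strict Implicit. Unset Printing Implicit Defensive.
Import Order.TTheory GRing.Theory Num.Theory.
Import numFieldNormedType.Exports.
Local Open Scope classical_set_scope.
Local Open Scope ring_scope.

Definition dotv (R : realType) (d : nat) (u x : 'rV[R]_d) : R :=
  \sum_(i < d) u ord0 i * x ord0 i.

Definition cs_convex_body (R : realType) (d : nat) (C : set 'rV[R]_d) : Prop :=
  [/\ compact C,
      (forall x y (t : R), C x -> C y -> 0 <= t -> t <= 1 ->
          C (t *: x + (1 - t) *: y)),
      interior C !=set0 &
      (forall x, C x <-> C (- x))].

Definition supporting (R : realType) (d : nat) (C : set 'rV[R]_d) (x u : 'rV[R]_d) :=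
  u != 0 /\ forall y, C y -> dotv u y <= dotv u x.

Definition hyperplane (R : realType) (d : nat) (x u : 'rV[R]_d) : set 'rV[R]_d :=
  [set y | dotv u y = dotv u x].

Definition smooth_body (R : realType) (d : nat) (C : set 'rV[R]_d) : Prop :=
  forall x, C x -> ~ interior C x ->
    (exists u, supporting C x u) /\
    (forall u1 u2, supporting C x u1 -> supporting C x u2 ->
       hyperplane x u1 = hyperplane x u2).

Definition normC (R : realType) (d : nat) (C : set 'rV[R]_d) (x : 'rV[R]_d) : R :=
  inf [set l : R | 0 < l /\ exists c, C c /\ x = l *: c].

(* A finite simple graph on vertex set 'I_n with m edges, edge e joining
   (ends e).1 and (ends e).2 (orientation irrelevant). *)
Definition simple_graph (n m : nat) (ends : 'I_m -> 'I_n * 'I_n) : Prop :=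
  (forall e, (ends e).1 != (ends e).2) /\
  (forall e e', ends e = ends e' \/ ends e = ((ends e').2, (ends e').1) -> e = e').

(* placements: row v of q : 'M_(n,d) is q_v *)
Definition fGC (R : realType) (d n m : nat) (C : set 'rV[R]_d)
    (ends : 'I_m -> 'I_n * 'I_n) (q : 'M[R]_(n, d)) : 'rV[R]_m :=
  \row_(e < m) (normC C (row (ends e).1 q - row (ends e).2 q) ^+ 2 / 2).

Definition well_positioned (R : realType) (d n m : nat) (C : set 'rV[R]_d)
    (ends : 'I_m -> 'I_n * 'I_n) (p : 'M[R]_(n, d)) : Prop :=
  (forall e, row (ends e).1 p != row (ends e).2 p) /\
  differentiable (fGC C ends) p.

(* rank of the rigidity matrix = rank of the derivative of fGC at p
   (represented as a matrix via vectorization of placements) *)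
Definition rigidity_rank (R : realType) (d n m : nat) (C : set 'rV[R]_d)
    (ends : 'I_m -> 'I_n * 'I_n) (p : 'M[R]_(n, d)) : nat :=
  \rank (lin1_mx (fun v : 'rV[R]_(n * d) => ('d (fGC C ends) p) (vec_mx v))).

Definition regular (R : realType) (d n m : nat) (C : set 'rV[R]_d)
    (ends : 'I_m -> 'I_n * 'I_n) (p : 'M[R]_(n, d)) : Prop :=
  well_positioned C ends p /\
  forall q, well_positioned C ends q ->
    (rigidity_rank C ends q <= rigidity_rank C ends p)%N.

Definition constant_fw (R : realType) (d n m : nat) (C : set 'rV[R]_d)
    (ends : 'I_m -> 'I_n * 'I_n) (p : 'M[R]_(n, d)) : Prop :=
  \forall q \near p,
    well_positioned C ends q /\ rigidity_rank C ends q = rigidity_rank C ends p.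

(* Main.v *)
Require Import Defs.
From HB Require Import structures.
From mathcomp Require Import all_boot all_order all_algebra.
From mathcomp Require Import all_classical all_reals all_analysis.
From mathcomp Require Import ring lra.
Set Implicit Arguments. Unset Strict Implicit. Unset Printing Implicit Defensive.
Import Order.TTheory GRing.Theory Num.Theory.
Import numFieldNormedType.Exports.
Local Open Scope classical_set_scope.
Local Open Scope ring_scope.
Section Basic.
Variable R : realType.

Lemma mx_entry_le a b (M : 'M[R]_(a, b)) i j : `|M i j| <= `|M|.
Proof.
rewrite [leRHS]/Num.Def.normr /= mx_normrE.
by apply: (le_trans _ (le_bigmax _ _ (i, j))).
Qed.

Lemma mx_norm_leP a b (M : 'M[R]_(a, b)) c : 0 <= c ->
  (forall i j, `|M i j| <= c) -> `|M| <= c.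
Proof.
move=> c0 H; rewrite [leLHS]/Num.Def.normr /= mx_normrE.
by apply/bigmax_leP; split => // -[i j] _; apply: H.
Qed.

Variable d : nat.
Implicit Types u x y : 'rV[R]_d.

Lemma dotvDr u x y : dotv u (x + y) = dotv u x + dotv u y.
Proof. by rewrite /dotv -big_split /=; apply: eq_bigr => i _; rewrite mxE mulrDr. Qed.
Lemma dotvDl u x y : dotv (x + y) u = dotv x u + dotv y u.
Proof. by rewrite /dotv -big_split /=; apply: eq_bigr => i _; rewrite mxE mulrDl. Qed.
Lemma dotvZr u x k : dotv u (k *: x) = k * dotv u x.
Proof. by rewrite /dotv mulr_sumr; apply: eq_bigr => i _; rewrite mxE mulrCA. Qed.
Lemma dotvZl u x k : dotv (k *: u) x = k * dotv u x.
Proof. by rewrite /dotv mulr_sumr; apply: eq_bigr => i _; rewrite mxE mulrA. Qed.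
Lemma dotvNr u x : dotv u (- x) = - dotv u x.
Proof. by rewrite -scaleN1r dotvZr mulN1r. Qed.
Lemma dotvNl u x : dotv (- u) x = - dotv u x.
Proof. by rewrite -scaleN1r dotvZl mulN1r. Qed.
Lemma dotvBr u x y : dotv u (x - y) = dotv u x - dotv u y.
Proof. by rewrite dotvDr dotvNr. Qed.
Lemma dotvBl u x y : dotv (x - y) u = dotv x u - dotv y u.
Proof. by rewrite dotvDl dotvNl. Qed.
Lemma dotv0r u : dotv u 0 = 0.
Proof. by rewrite /dotv big1 // => i _; rewrite mxE mulr0. Qed.
Lemma dotv0l u : dotv 0 u = 0.
Proof. by rewrite /dotv big1 // => i _; rewrite mxE mul0r. Qed.
Lemma dotv_delta u i : dotv u (delta_mx 0 i) = u 0 i.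
Proof.
rewrite /dotv (bigD1 i) //= big1 ?addr0.
  by rewrite mxE !eqxx mulr1.
by move=> j /negbTE ji; rewrite mxE ji andbF mulr0.
Qed.

Lemma dotv_bound u x : `|dotv u x| <= d%:R * `|u| * `|x|.
Proof.
rewrite /dotv (le_trans (ler_norm_sum _ _ _)) //.
have -> : d%:R * `|u| * `|x| = \sum_(i < d) (`|u| * `|x|).
  by rewrite sumr_const card_ord -mulrA mulr_natl.
apply: ler_sum => i _; rewrite normrM.
by apply: ler_pM => //; apply: mx_entry_le.
Qed.

Lemma dotv_self_gt0 u : u != 0 -> 0 < dotv u u.
Proof.
move=> u0.
have [i ui] : exists i, u 0 i != 0.
  apply/existsP; move: u0; apply: contraR; rewrite negb_exists => /forallP H.
  apply/eqP/rowP => i; rewrite mxE; apply/eqP; move: (H i); rewrite negbK.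
  by [].
rewrite /dotv (bigD1 i) //=.
apply: (@lt_le_trans _ _ (u 0 i * u 0 i)).
  by rewrite -expr2 exprn_even_gt0.
rewrite lerDl sumr_ge0 // => j _; rewrite -expr2 sqr_ge0 //.
Qed.

Lemma norm_delta i : `|delta_mx 0 i : 'rV[R]_d| <= 1.
Proof.
apply: mx_norm_leP => // a b; rewrite mxE.
by case: (_ && _); rewrite ?normr1 ?normr0.
Qed.

End Basic.
Section Body.
Variables (R : realType) (d : nat) (C : set 'rV[R]_d).
Hypotheses (hC : cs_convex_body C) (hS : smooth_body C).

Lemma ball0_in : exists2 rho : R, 0 < rho & forall w, `|w| < rho -> C w.
Proof.
case: hC => _ conv [z zi] sym.
have /nbhs_ballP [e e0 be] := zi.
exists e => // w hw.
have h1 : C (z + w).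
  by apply: be; rewrite -ball_normE /= opprD addrA subrr sub0r normrN.
have h2 : C (w - z).
  have : C (z - w) by apply: be; rewrite -ball_normE /= opprB addrC subrK.
  by move/sym; rewrite opprB.
have := conv _ _ (1/2) h1 h2.
have -> : 1 / 2 *: (z + w) + (1 - 1 / 2) *: (w - z) = w.
  by apply/rowP => i; rewrite !mxE; field.
by apply; lra.
Qed.

Lemma bounded_C : exists2 B : R, 0 < B & forall c, C c -> `|c| < B.
Proof.
case: hC => cpt _ _ _.
have [M [Mr HM]] := compact_bounded cpt.
exists (`|M| + 2); first by rewrite ltr_wpDl.
move=> c Cc.
have M1 : M < `|M| + 1 by rewrite (le_lt_trans (real_ler_norm Mr)) // ltrDl.
have /= h := HM (`|M| + 1) M1 c Cc.
by apply: (le_lt_trans h); rewrite ltrD2l; lra.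
Qed.

Variables (rho B : R).
Hypotheses (rho0 : 0 < rho) (hrho : forall w, `|w| < rho -> C w)
  (B0 : 0 < B) (hB : forall c, C c -> `|c| < B).

Local Notation N := (normC C).
Local Notation Sx x := [set l : R | 0 < l /\ exists c, C c /\ x = l *: c].

Lemma C0 : C 0.
Proof. by apply: hrho; rewrite normr0. Qed.

Lemma S_big x l : 0 < l -> `|x| < l * rho -> Sx x l.
Proof.
move=> l0 hx; split => //; exists (l^-1 *: x); split.
  apply: hrho; rewrite normrZ gtr0_norm ?invr_gt0 //.
  by rewrite ltr_pdivrMl // .
by rewrite scalerA mulfV ?scale1r // gt_eqF.
Qed.

Lemma S_ne x : Sx x (`|x| / rho + 1).
Proof.
apply: S_big; first by rewrite ltr_wpDl // divr_ge0 // ltW.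
by rewrite mulrDl mul1r divfK ?gt_eqF // ltrDl.
Qed.

Lemma S_lb x : lbound (Sx x) 0.
Proof. by move=> l [l0 _]; apply: ltW. Qed.

Lemma N_ge0 x : 0 <= N x.
Proof. by apply: lb_le_inf; [exists (`|x| / rho + 1); apply: S_ne | apply: S_lb]. Qed.

Lemma N_le_inf x l : Sx x l -> N x <= l.
Proof. by move=> hl; apply: (ge_inf (E := Sx x)) => //; exists 0; apply: S_lb. Qed.

Lemma S_up x l l' : Sx x l -> l <= l' -> Sx x l'.
Proof.
move=> [l0 [c [Cc ->]]] ll'.
have l'0 : 0 < l' by apply: lt_le_trans ll'.
split => //; exists ((l / l') *: c); split.
  have [_ conv _ _] := hC.
  have := conv c 0 (l / l') Cc C0.
  rewrite scaler0 addr0; apply.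
    by rewrite divr_ge0 // ltW.
  by rewrite ler_pdivrMr // mul1r.
by rewrite scalerA mulrCA mulfV ?mulr1 // gt_eqF.
Qed.

Lemma N_lt x l : N x < l -> Sx x l.
Proof.
move=> /(inf_lt (ex_intro _ _ (S_ne x))) [y Sy yl].
by apply: S_up Sy (ltW yl).
Qed.

Lemma N_ub x : N x <= `|x| / rho.
Proof.
apply/ler_addgt0Pr => e e0; apply: N_le_inf; apply: S_big.
  by rewrite ltr_wpDl // divr_ge0 // ltW.
by rewrite mulrDl divfK ?gt_eqF // ltrDl mulr_gt0.
Qed.

Lemma N_lb x : `|x| / B <= N x.
Proof.
apply: lb_le_inf; first by exists (`|x| / rho + 1); apply: S_ne.
move=> l [l0 [c [Cc ->]]].
rewrite normrZ gtr0_norm // ler_pdivrMr //.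
by rewrite ler_pM2l // ltW // hB.
Qed.

Lemma N_C y : C y -> N y <= 1.
Proof. by move=> Cy; apply: N_le_inf; split => //; exists y; rewrite scale1r. Qed.

Lemma N0 : N 0 = 0.
Proof. by apply/eqP; rewrite eq_le N_ge0 andbT (le_trans (N_ub 0)) // normr0 mul0r. Qed.

Lemma N_gt0 x : x != 0 -> 0 < N x.
Proof.
move=> x0; apply: lt_le_trans (N_lb x).
by rewrite divr_gt0 // normr_gt0.
Qed.

End Body.
Section Body2.
Variables (R : realType) (d : nat) (C : set 'rV[R]_d).
Hypotheses (hC : cs_convex_body C) (hS : smooth_body C).
Variables (rho B : R).
Hypotheses (rho0 : 0 < rho) (hrho : forall w, `|w| < rho -> C w)
  (B0 : 0 < B) (hB : forall c, C c -> `|c| < B).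

Local Notation N := (normC C).
Let N_gt0' := @N_gt0 R d C rho B rho0 hrho B0 hB.
Let N_lt' := @N_lt R d C hC rho rho0 hrho.
Let N_ub' := @N_ub R d C rho rho0 hrho.
Let N_lb' := @N_lb R d C rho B rho0 hrho B0 hB.
Let N_ge0' := @N_ge0 R d C rho rho0 hrho.
Let S_up' := @S_up R d C hC rho rho0 hrho.

Lemma N_inC x : x != 0 -> C ((N x)^-1 *: x).
Proof.
move=> x0.
have Nx0 := N_gt0' x0.
have clC : closed C by case: hC => cpt _ _ _; apply: compact_closed => //; apply: norm_hausdorff.
apply: (@closed_cvg _ _ (0^'+) _ (fun t : R => (N x + t)^-1 *: x) C clC).
  near=> t.
  have t0 : 0 < t by near: t; apply: nbhs_right_gt.
  have [_ [c [Cc xe]]] := N_lt' (x := x) (l := N x + t) ltac:(by rewrite ltrDl).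
  by rewrite [X in _ *: X]xe scalerA mulVf ?scale1r // gt_eqF // ltr_wpDr // ltW.
apply: cvgZr_tmp.
have -> : (N x)^-1 = (N x + 0)^-1 by rewrite addr0.
apply: cvgV; first by rewrite addr0 gt_eqF.
apply: cvgD; first exact: cvg_cst.
exact: cvg_within.
Unshelve. all: by end_near.
Qed.


Lemma N_notint x : x != 0 -> ~ interior C ((N x)^-1 *: x).
Proof.
move=> x0 /nbhs_ballP [e e0 be].
set s := (N x)^-1 *: x.
have Nx0 := N_gt0' x0.
set t := e / (`|s| + 1).
have t0 : 0 < t by rewrite divr_gt0 // ltr_wpDl.
have : C ((1 + t) *: s).
  apply: be; rewrite -ball_normE /= scalerDl scale1r opprD addrA subrr sub0r.
  rewrite normrN normrZ gtr0_norm // /t mulrAC ltr_pdivrMr ?ltr_wpDl //.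
  by rewrite ltr_pM2l // ltrDl.
move=> Cs.
have : N x <= N x / (1 + t).
  apply: N_le_inf; split; first by rewrite divr_gt0 // ltr_wpDr // ltW.
  exists ((1 + t) *: s); split => //.
  have t1 : 1 + t != 0 by rewrite gt_eqF // ltr_wpDr // ltW.
  have Nx1 : N x != 0 by rewrite gt_eqF.
  rewrite /s !scalerA -[LHS]scale1r; congr (_ *: _).
  by rewrite divfK // mulfV.
have t1' : 0 < 1 + t by rewrite addrC ltr_wpDl // ltW.
by rewrite ler_pdivlMr // ger_pMr // gerDl leNgt t0.
Qed.

Definition gprop x u := (forall y, dotv u y <= N y) /\ dotv u x = N x.

Lemma g_exists x : x != 0 -> exists u, gprop x u.
Proof.
move=> x0.
have Nx0 := N_gt0' x0.
set s := (N x)^-1 *: x.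
have [[v [v0 vsup]] _] := hS (N_inC x0) (N_notint x0).
set a := dotv v s.
have a0 : 0 < a.
  set t := rho / (2 * (`|v| + 1)).
  have t0 : 0 < t by rewrite divr_gt0 // mulr_gt0 // ltr_wpDl.
  have : C (t *: v).
    apply: hrho; rewrite normrZ gtr0_norm // /t mulrAC ltr_pdivrMr ?mulr_gt0 ?ltr_wpDl //.
    rewrite ltr_pM2l //; have := normr_ge0 v; lra.
  move=> /vsup; apply: lt_le_trans; rewrite dotvZr mulr_gt0 //.
  exact: dotv_self_gt0.
exists (a^-1 *: v); split.
  move=> y; apply/ler_addgt0Pr => e e0.
  have [l0 [c [Cc ye]]] := N_lt' (x := y) (l := N y + e) ltac:(by rewrite ltrDl).
  have Ne : 0 < N y + e by rewrite ltr_wpDl ?N_ge0'.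
  rewrite [X in dotv _ X]ye dotvZl dotvZr mulrCA ger_pMr // ler_pdivrMl // mulr1.
  by rewrite vsup.
have xe : x = N x *: s by rewrite /s scalerA mulfV ?scale1r // gt_eqF.
by rewrite [X in dotv _ X]xe dotvZl dotvZr -/a mulrCA mulVf ?mulr1 // gt_eqF.
Qed.

Lemma dotv_eq (u1 u2 : 'rV[R]_d) : (forall i, u1 0 i = u2 0 i) -> u1 = u2.
Proof. by move=> H; apply/rowP => i; rewrite -H; congr (u1 _ _); apply/val_inj; case: (0 : 'I_1) => [[]]. Qed.

Lemma g_unique x u1 u2 : x != 0 -> gprop x u1 -> gprop x u2 -> u1 = u2.
Proof.
move=> x0 [h1 e1] [h2 e2].
have Nx0 := N_gt0' x0.
have [_ uniq] := hS (N_inC x0) (N_notint x0).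
have es1 : dotv u1 ((N x)^-1 *: x) = 1 by rewrite dotvZr e1 mulVf // gt_eqF.
have es2 : dotv u2 ((N x)^-1 *: x) = 1 by rewrite dotvZr e2 mulVf // gt_eqF.
move: ((N x)^-1 *: x) es1 es2 uniq => s es1 es2 uniq.
have sup u : (forall y, dotv u y <= N y) -> dotv u s = 1 -> supporting C s u.
  move=> hu esu; split.
    by apply/eqP => u0; move: esu; rewrite u0 dotv0l => /eqP; rewrite eq_sym oner_eq0.
  by move=> y Cy; rewrite esu (le_trans (hu y)) // N_C.
have H := uniq _ _ (sup _ h1 es1) (sup _ h2 es2).
apply: dotv_eq => i.
have : hyperplane s u1 (s + (delta_mx 0 i - (dotv u1 (delta_mx 0 i)) *: s)).
  by rewrite /hyperplane /= dotvDr dotvBr dotvZr es1 mulr1 subrr addr0.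
rewrite H /hyperplane /= dotvDr dotvBr dotvZr es2 mulr1 !dotv_delta.
by move=> /eqP h; lra.

Qed.

Definition gC x : 'rV[R]_d := if x == 0 then 0 else xget 0 (gprop x).

Lemma gP x : gprop x (gC x).
Proof.
rewrite /gC; case: eqP => [->|/eqP x0]; last exact: xgetPex (g_exists x0).
split; last by rewrite dotv0l (N0 rho0 hrho).
by move=> y; rewrite dotv0l N_ge0'.
Qed.

Lemma g_bound x : `|gC x| <= rho^-1.
Proof.
have [hg _] := gP x.
apply: mx_norm_leP => [|i j]; first by rewrite invr_ge0 ltW.
have -> : i = 0 by apply: ord1.
have le1 (w : 'rV[R]_d) : `|w| <= 1 -> N w <= rho^-1.
  by move=> w1; rewrite (le_trans (N_ub' w)) // ler_pdivrMr // mulVf ?gt_eqF.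
rewrite ler_norml; apply/andP; split.
  rewrite lerNl -dotv_delta -dotvNr (le_trans (hg _)) // le1 //.
  by rewrite normrN norm_delta.
by rewrite -dotv_delta (le_trans (hg _)) // le1 // norm_delta.
Qed.

Lemma sub_grad x y : N x + dotv (gC x) (y - x) <= N y.
Proof.
have [hg ex] := gP x.
by rewrite dotvBr ex addrC subrK hg.
Qed.

Definition LipC : R := d%:R * rho^-1.

Lemma dotv_g_bound x w : `|dotv (gC x) w| <= LipC * `|w|.
Proof.
rewrite (le_trans (dotv_bound _ _)) // ler_wpM2r // ler_wpM2l //.
exact: g_bound.
Qed.

Lemma N_lip x y : `|N y - N x| <= LipC * `|y - x|.
Proof.
have h1 := sub_grad x y; have h2 := sub_grad y x.
move: (dotv_g_bound x (y - x)); rewrite ler_norml => /andP [b1 b2].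
move: (dotv_g_bound y (x - y)); rewrite ler_norml -normrN opprB => /andP [b3 b4].
rewrite ler_norml; apply/andP; split; lra.
Qed.

End Body2.
Section Body3.
Variables (R : realType) (d : nat) (C : set 'rV[R]_d).
Hypotheses (hC : cs_convex_body C) (hS : smooth_body C).
Variables (rho B : R).
Hypotheses (rho0 : 0 < rho) (hrho : forall w, `|w| < rho -> C w)
  (B0 : 0 < B) (hB : forall c, C c -> `|c| < B).

Local Notation N := (normC C).
Local Notation g := (gC C).
Local Notation L := (LipC d rho).
Let gP' := @gP R d C hC hS rho B rho0 hrho B0 hB.
Let g_bound' := @g_bound R d C hC hS rho B rho0 hrho B0 hB.
Let N_lip' := @N_lip R d C hC hS rho B rho0 hrho B0 hB.
Let dotv_g_bound' := @dotv_g_bound R d C hC hS rho B rho0 hrho B0 hB.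
Let g_unique' := @g_unique R d C hC hS rho B rho0 hrho B0 hB.

Lemma L_ge0 : 0 <= L.
Proof. by rewrite /LipC mulr_ge0 // invr_ge0 ltW. Qed.

Lemma cluster_g (x u : 'rV[R]_d) : x != 0 -> cluster (g @ x) u -> u = g x.
Proof.
move=> x0 cl.
have hu : forall y, dotv u y <= N y.
  move=> y; rewrite leNgt; apply/negP => hlt.
  set del := dotv u y - N y.
  have del0 : 0 < del by rewrite subr_gt0.
  set r := del / (d%:R * `|y| + 1).
  have r0 : 0 < r by rewrite divr_gt0 // ltr_wpDl // mulr_ge0.
  have [v [[z _ <-] bv]] := cl (range g) (ball u r)
    (filterS (fun z _ => ex_intro2 _ _ z I erefl) filterT) (nbhsx_ballx u r r0).
  move: bv; rewrite -ball_normE /= => bv.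
  have := (proj1 (gP' z)) y.
  have := dotv_bound (u - g z) y; rewrite dotvBl.
  have : d%:R * `|u - g z| * `|y| <= r * (d%:R * `|y|).
    by rewrite mulrAC mulrC; apply: ler_wpM2r; [rewrite mulr_ge0 | exact: ltW].
  have : r * (d%:R * `|y|) < del.
    rewrite /r mulrAC ltr_pdivrMr ?ltr_wpDl ?mulr_ge0 //.
    by rewrite ltr_pM2l // ltrDl.
  rewrite /del => h1 h2 /ler_normlP [h3 h4] h5; lra.
apply: (g_unique' x0 _ (gP' x)); split => //.
apply/eqP; rewrite eq_le hu /=.
apply/ler_addgt0Pr => e e0.
set K := 2 * L + d%:R * `|x| + 1.
have K0 : 0 < K.
  have Lg := L_ge0; have := normr_ge0 x; have : (0:R) <= d%:R := ler0n _ _.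
  rewrite /K; nra.
set r := e / K.
have r0 : 0 < r by rewrite divr_gt0.
have [v [[z bz <-] bv]] := cl (g @` ball x r) (ball u r)
    (filterS (fun z bz => ex_intro2 _ _ z bz erefl) (nbhsx_ballx x r r0)) (nbhsx_ballx u r r0).
move: bz bv; rewrite -!ball_normE /= => bz bv.
have l1 := N_lip' z x.
have [_ ez] := gP' z.
have l2 := dotv_g_bound' z (z - x).
have l3 := dotv_bound (g z - u) x.
move: l1 l2 l3; rewrite !dotvBr !dotvBl => /ler_normlP [l1 l1'] /ler_normlP [l2 l2'] /ler_normlP [l3 l3'].
have e1 : L * `|x - z| <= L * r by rewrite ler_wpM2l ?L_ge0 // ltW.
have e2 : L * `|z - x| <= L * r by rewrite ler_wpM2l ?L_ge0 // distrC ltW.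
have e3 : d%:R * `|g z - u| * `|x| <= d%:R * r * `|x|.
  by rewrite ler_wpM2r // ler_wpM2l // distrC ltW.
have e4 : r * K = e by rewrite /r divfK // gt_eqF.
have Lx := normr_ge0 x.
rewrite /K in e4.
nra.
Qed.

Lemma g_cont (x : 'rV[R]_d) : x != 0 -> g @ x --> g x.
Proof.
move=> x0.
set r := rho^-1 + 1.
have r0 : 0 < r by rewrite ltr_wpDl // invr_ge0 ltW.
have Kin v : `|v| <= r -> closed_ball (0 : 'rV[R]_d) r v.
  by move=> hv; rewrite closed_ballE // /closed_ball_ /= sub0r normrN.
have cptK : compact (closed_ball (0 : 'rV[R]_d) r).
  apply: bounded_closed_compact; last exact: closed_ball_closed.
  exists r; split; first by rewrite gtr0_real.
  move=> M Mr y; rewrite closed_ballE // /closed_ball_ /= sub0r normrN => h.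
  by rewrite (le_trans h) // ltW.
have FK : (g @ x) (closed_ball (0 : 'rV[R]_d) r).
  change (nbhs x (g @^-1` closed_ball (0 : 'rV[R]_d) r)).
  apply: filterS filterT => z _; apply: Kin.
  by rewrite (le_trans (g_bound' z)) // /r lerDl.
apply: (@compact_cluster_set1 _ (g x) (g @ x) _ _ cptK).
- exact: (@norm_hausdorff R 'rV[R]_d).
- apply/nbhs_ballP; exists 1; first exact: ltr01.
  move=> v; rewrite -ball_normE /= => hv.
  apply: Kin; rewrite /r.
  have := g_bound' x; have := ler_distD (g x) 0 v.
  rewrite !sub0r !normrN => h1 h2; apply: (le_trans h1); apply: lerD => //; exact: ltW.
- apply: fmap_proper_filter; exact: nbhs_pfilter.
- exact: FK.
- have [u [_ cu]] := cptK _ (fmap_proper_filter _ _) FK.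
  have ue := cluster_g x0 cu.
  apply/seteqP; split => [v /(cluster_g x0) -> //| v ->].
  by rewrite -ue.
Qed.

End Body3.
Section Body4.
Variables (R : realType) (d : nat) (C : set 'rV[R]_d).
Hypotheses (hC : cs_convex_body C) (hS : smooth_body C).
Variables (rho B : R).
Hypotheses (rho0 : 0 < rho) (hrho : forall w, `|w| < rho -> C w)
  (B0 : 0 < B) (hB : forall c, C c -> `|c| < B).

Local Notation N := (normC C).
Local Notation g := (gC C).
Local Notation L := (LipC d rho).
Let gP' := @gP R d C hC hS rho B rho0 hrho B0 hB.
Let N_lip' := @N_lip R d C hC hS rho B rho0 hrho B0 hB.
Let sub_grad' := @sub_grad R d C hC hS rho B rho0 hrho B0 hB.
Let g_cont' := @g_cont R d C hC hS rho B rho0 hrho B0 hB.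
Let N_ge0' := @N_ge0 R d C rho rho0 hrho.

Lemma h_est (x : 'rV[R]_d) : x != 0 -> forall e, 0 < e ->
  \forall y \near x, `|(N y ^+ 2 / 2 - N x ^+ 2 / 2) - N x * dotv (g x) (y - x)|
     <= e * `|y - x|.
Proof.
move=> x0 e e0.
set a := N x.
have a0 : 0 <= a := N_ge0' x.
have d0 : (0:R) <= d%:R := ler0n _ _.
have L0 : 0 <= L by rewrite /LipC mulr_ge0 // invr_ge0 ltW.
set eps1 := e / (2 * (a * d%:R + 1)).
set eps2 := e / (L ^+ 2 + 1).
have eps10 : 0 < eps1 by rewrite divr_gt0 // mulr_gt0 // ltr_wpDl // mulr_ge0.
have eps20 : 0 < eps2 by rewrite divr_gt0 // ltr_wpDl // sqr_ge0.
have k1 : a * d%:R * eps1 <= e / 2.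
  have D0 : 0 <= a * d%:R by rewrite mulr_ge0.
  rewrite /eps1 mulrA ler_pdivrMr ?mulr_gt0 ?ltr_wpDl //; nra.
have k2 : L ^+ 2 * eps2 <= e.
  have L2 : 0 <= L ^+ 2 by rewrite sqr_ge0.
  rewrite /eps2 mulrA ler_pdivrMr ?ltr_wpDl //; nra.
near=> y.
have hg : `|g x - g y| < eps1.
  near: y; exact: (@cvgr_dist_lt _ _ _ (nbhs x) _ g (g x) (g_cont' x0) _ eps10).
have hy : `|x - y| < eps2.
  by near: y; have := nbhsx_ballx x eps2 eps20; rewrite -ball_normE.
set t := `|y - x|.
have t0 : 0 <= t := normr_ge0 _.
have ht : t <= eps2 by rewrite /t distrC ltW.
set b := N y.
set G := dotv (g x) (y - x).
set G' := dotv (g y) (y - x).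
have f1 : a + G <= b := sub_grad' x y.
have f2 : b - a <= G'.
  have h := sub_grad' y x.
  have e' : dotv (g y) (x - y) = - G' by rewrite /G' -dotvNr opprB.
  rewrite e' -/a -/b in h; lra.
have f3 : G' - G <= d%:R * eps1 * t.
  rewrite /G' /G -dotvBl (le_trans (ler_norm _)) // (le_trans (dotv_bound _ _)) //.
  by rewrite ler_wpM2r // ler_wpM2l // distrC ltW.
have /ler_normlP [f4 f5] : `|b - a| <= L * t := N_lip' x y.
have f6 : (b - a) ^+ 2 <= L ^+ 2 * t ^+ 2.
  have Lt0 : 0 <= L * t by rewrite mulr_ge0.
  rewrite -exprMn; nra.
have f7 : L ^+ 2 * t ^+ 2 <= e * t.
  have q1 : t ^+ 2 <= eps2 * t by nra.
  have q2 := ler_wpM2l (sqr_ge0 L) q1.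
  have q3 := ler_wpM2r t0 k2.
  rewrite mulrA in q2; lra.
have p1 : 0 <= a * (b - a - G) by rewrite mulr_ge0 //; lra.
have p2 : a * (b - a - G) <= a * (d%:R * eps1 * t).
  by rewrite ler_wpM2l //; lra.
have p3 : a * (d%:R * eps1 * t) <= e / 2 * t.
  by have q := ler_wpM2r t0 k1; move: q; rewrite !mulrA.
have -> : N y ^+ 2 / 2 - N x ^+ 2 / 2 - N x * dotv (g x) (y - x)
   = a * (b - a - G) + (b - a) ^+ 2 / 2.
  rewrite -/a -/b -/G.
  by field.
have sq := sqr_ge0 (b - a); have et : 0 <= e * t by rewrite mulr_ge0 // ltW.
rewrite ler_norml; apply/andP; split; lra.
Unshelve. all: by end_near.
Qed.

End Body4.
Section Helpers.
Variable R : realType.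

Lemma lip_cvg (V W : normedModType R) (f : V -> W) (K : R) (x : V) :
  (forall y, `|f y - f x| <= K * `|y - x|) -> f @ x --> f x.
Proof.
move=> hf; apply/cvgrPdist_lt => e e0.
have K1 : 0 < `|K| + 1 by rewrite ltr_wpDl.
have e1 : 0 < e / (`|K| + 1) by rewrite divr_gt0.
near=> y.
have hy : `|x - y| < e / (`|K| + 1).
  by near: y; have := nbhsx_ballx x _ e1; rewrite -ball_normE.
rewrite distrC (le_lt_trans (hf y)) //.
apply: (@le_lt_trans _ _ ((`|K| + 1) * `|y - x|)).
  by rewrite ler_wpM2r // (le_trans (ler_norm K)) // lerDl.
by rewrite -ltr_pdivlMl // mulrC distrC.
Unshelve. all: by end_near.
Qed.

Lemma cvg_sumR (T : Type) (F : set_system T) (FF : Filter F) (I : Type) (r : seq I)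
  (P : pred I) (f : I -> T -> R) (a : I -> R) :
  (forall i, f i @ F --> a i) ->
  (fun x => \sum_(i <- r | P i) f i x) @ F --> \sum_(i <- r | P i) a i.
Proof.
move=> hf; elim: r => [|i r IH].
  rewrite big_nil; under eq_cvg do rewrite big_nil; exact: cvg_cst.
rewrite big_cons; under eq_cvg do rewrite big_cons.
case: (P i) => //.
exact: cvgD.
Qed.

Lemma cvg_prodR (T : Type) (F : set_system T) (FF : Filter F) (I : Type) (r : seq I)
  (P : pred I) (f : I -> T -> R) (a : I -> R) :
  (forall i, f i @ F --> a i) ->
  (fun x => \prod_(i <- r | P i) f i x) @ F --> \prod_(i <- r | P i) a i.
Proof.
move=> hf; elim: r => [|i r IH].
  rewrite big_nil; under eq_cvg do rewrite big_nil; exact: cvg_cst.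
rewrite big_cons; under eq_cvg do rewrite big_cons.
case: (P i) => //.
exact: cvgM.
Qed.

Lemma row_norm a b (M : 'M[R]_(a, b)) i : `|row i M| <= `|M|.
Proof.
apply: mx_norm_leP => // i' j; rewrite mxE; exact: mx_entry_le.
Qed.

Lemma mxvec_norm a b (M : 'M[R]_(a, b)) i : `|mxvec M 0 i| <= `|M|.
Proof. by case/mxvec_indexP: i => i j; rewrite mxvecE; exact: mx_entry_le. Qed.

End Helpers.

Definition xe (R : realType) (d n m : nat) (ends : 'I_m -> 'I_n * 'I_n)
  (q : 'M[R]_(n, d)) (e : 'I_m) : 'rV[R]_d := row (ends e).1 q - row (ends e).2 q.

Section Frame.
Variables (R : realType) (d : nat) (C : set 'rV[R]_d).
Hypotheses (hC : cs_convex_body C) (hS : smooth_body C).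
Variables (rho B : R).
Hypotheses (rho0 : 0 < rho) (hrho : forall w, `|w| < rho -> C w)
  (B0 : 0 < B) (hB : forall c, C c -> `|c| < B).
Variables (n m : nat) (ends : 'I_m -> 'I_n * 'I_n).

Local Notation N := (normC C).
Local Notation g := (gC C).
Local Notation L := (LipC d rho).
Local Notation xe := (xe ends).
Let N_lip' := @N_lip R d C hC hS rho B rho0 hrho B0 hB.
Let g_cont' := @g_cont R d C hC hS rho B rho0 hrho B0 hB.
Let N_ge0' := @N_ge0 R d C rho rho0 hrho.
Let dotv_g_bound' := @dotv_g_bound R d C hC hS rho B rho0 hrho B0 hB.
Let h_est' := @h_est R d C hC hS rho B rho0 hrho B0 hB.

Lemma L0 : 0 <= L.
Proof. by rewrite /LipC mulr_ge0 // invr_ge0 ltW. Qed.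

Lemma xeD (k q : 'M[R]_(n, d)) e : xe (k + q) e = xe k e + xe q e.
Proof. by apply/rowP => j; rewrite /xe !mxE; ring. Qed.
Lemma xeB (k q : 'M[R]_(n, d)) e : xe (k - q) e = xe k e - xe q e.
Proof. by apply/rowP => j; rewrite /xe !mxE; ring. Qed.
Lemma xeZ a (k : 'M[R]_(n, d)) e : xe (a *: k) e = a *: xe k e.
Proof. by apply/rowP => j; rewrite /xe !mxE; ring. Qed.
Lemma xe0 e : xe (0 : 'M[R]_(n, d)) e = 0.
Proof. by apply/rowP => j; rewrite /xe !mxE; ring. Qed.

Lemma xe_norm (k : 'M[R]_(n, d)) e : `|xe k e| <= 2 * `|k|.
Proof.
rewrite /xe (le_trans (ler_normB _ _)) // mulr2n mulrDl mul1r.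
by rewrite lerD // row_norm.
Qed.

Definition dfl (q : 'M[R]_(n, d)) (k : 'M[R]_(n, d)) : 'rV[R]_m :=
  \row_e (N (xe q e) * dotv (g (xe q e)) (xe k e)).

Lemma dfl_linear q : linear (dfl q).
Proof.
move=> a k k'; apply/rowP => e; rewrite /dfl !mxE xeD xeZ dotvDr dotvZr.
ring.
Qed.

HB.instance Definition _ q := GRing.isLinear.Build R 'M[R]_(n, d) 'rV[R]_m _ (dfl q) (dfl_linear q).

Lemma dfl_bound q k : `|dfl q k| <= ((\sum_e N (xe q e)) * L * 2) * `|k|.
Proof.
apply: mx_norm_leP => [|i e].
  by rewrite mulr_ge0 // mulr_ge0 // ?L0 // mulr_ge0 ?sumr_ge0 // ?L0.
rewrite mxE normrM ger0_norm // -!mulrA.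
apply: ler_pM => //.
  by rewrite (bigD1 e) //= lerDl sumr_ge0.
rewrite (le_trans (dotv_g_bound' _ _)) //.
have h := xe_norm k e; have l0 := L0; rewrite /LipC in l0 *; nra.
Qed.

Lemma dfl_cont q : continuous (dfl q).
Proof.
move=> k0; apply: (@lip_cvg R _ _ _ ((\sum_e N (xe q e)) * L * 2)) => k.
by rewrite -linearB dfl_bound.
Qed.

Lemma xe_cvg (q : 'M[R]_(n, d)) e : (fun k => xe (k + q) e) @ (0 : 'M[R]_(n, d)) --> xe q e.
Proof.
have h : forall y : 'M[R]_(n, d), `|xe (y + q) e - xe (0 + q) e| <= 2 * `|y - 0|.
  move=> y; rewrite !xeD xe0 add0r subr0 addrK; exact: xe_norm.
have := @lip_cvg R _ _ (fun k : 'M[R]_(n, d) => xe (k + q) e) 2 0 h.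
by rewrite xeD xe0 add0r.
Qed.

Lemma fGC_diff (q : 'M[R]_(n, d)) : (forall e, xe q e != 0) ->
  fGC C ends \o shift q = cst (fGC C ends q) + dfl q +o_ (0 : 'M[R]_(n, d)) id.
Proof.
move=> hq; apply/eqaddoP => eps eps0.
have eps2 : 0 < eps / 2 by rewrite divr_gt0.
have H : forall e, \forall k \near (0 : 'M[R]_(n, d)),
    `|(fGC C ends (k + q) - (fGC C ends q + dfl q k)) 0 e| <= eps * `|k|.
  move=> e.
  have hx := @xe_cvg q e _ (h_est' (hq e) eps2).
  near=> k.
  have h : `|N (xe (k + q) e) ^+ 2 / 2 - N (xe q e) ^+ 2 / 2 -
     N (xe q e) * dotv (g (xe q e)) (xe (k + q) e - xe q e)| <= eps / 2 * `|xe (k + q) e - xe q e|.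
    by near: k; exact: hx.
  move: h; rewrite xeD addrK => h.
  rewrite !mxE -/(xe (k + q) e) -/(xe q e) -/(xe k e) xeD.
  rewrite opprD addrA (le_trans h) //.
  have := xe_norm k e; have := normr_ge0 (xe k e); nra.
near=> k.
have hk : forall e, `|(fGC C ends (k + q) - (fGC C ends q + dfl q k)) 0 e| <= eps * `|k|.
  by near: k; exact: filter_forall H.
apply: mx_norm_leP => [|i e]; first by rewrite mulr_ge0 // ltW.
have -> : i = 0 by apply: ord1.
by move: (hk e); rewrite /= !mxE.
Unshelve. all: by end_near.
Qed.

Lemma fGC_d (q : 'M[R]_(n, d)) : (forall e, xe q e != 0) ->
  differentiable (fGC C ends) q /\ ('d (fGC C ends) q : _ -> _) = dfl q.
Proof.
move=> hq.
have ho := fGC_diff hq.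
have eq := diff_unique (@dfl_cont q) ho.
split => //.
apply/diff_locallyP; rewrite eq; split => //; exact: (@dfl_cont q).
Qed.

End Frame.
Section MxCvg.
Variable R : realType.

Lemma mx3_cvg (T : Type) (F : set_system T) (FF : Filter F) a b c e
  (X : 'M[R]_(a, b)) (M : T -> 'M[R]_(b, c)) (M0 : 'M[R]_(b, c)) (Y : 'M[R]_(c, e)) :
  (forall i j, (fun x => M x i j) @ F --> M0 i j) ->
  forall i j, (fun x => (X *m M x *m Y) i j) @ F --> (X *m M0 *m Y) i j.
Proof.
move=> hM i j.
rewrite mxE; under eq_cvg do rewrite mxE.
apply: cvg_sumR => k; apply: cvgM; last exact: cvg_cst.
rewrite mxE; under eq_cvg do rewrite mxE.
apply: cvg_sumR => l; apply: cvgM; first exact: cvg_cst.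
exact: hM.
Qed.

Lemma det_cvg (T : Type) (F : set_system T) (FF : Filter F) a
  (M : T -> 'M[R]_a) (M0 : 'M[R]_a) :
  (forall i j, (fun x => M x i j) @ F --> M0 i j) ->
  (fun x => \det (M x)) @ F --> \det M0.
Proof.
move=> hM; rewrite /determinant.
apply: cvg_sumR => s; apply: cvgM; first exact: cvg_cst.
apply: cvg_prodR => i; exact: hM.
Qed.

End MxCvg.

Section Final.
Variables (R : realType) (d : nat) (C : set 'rV[R]_d).
Hypotheses (hC : cs_convex_body C) (hS : smooth_body C).
Variables (rho B : R).
Hypotheses (rho0 : 0 < rho) (hrho : forall w, `|w| < rho -> C w)
  (B0 : 0 < B) (hB : forall c, C c -> `|c| < B).
Variables (n m : nat) (ends : 'I_m -> 'I_n * 'I_n).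

Local Notation N := (normC C).
Local Notation g := (gC C).
Local Notation L := (LipC d rho).
Local Notation xe := (xe ends).
Local Notation dfl := (dfl C ends).
Let N_lip' := @N_lip R d C hC hS rho B rho0 hrho B0 hB.
Let g_cont' := @g_cont R d C hC hS rho B rho0 hrho B0 hB.
Let fGC_d' := @fGC_d R d C hC hS rho B rho0 hrho B0 hB n m ends.

Definition Amx (q : 'M[R]_(n, d)) : 'M[R]_(n * d, m) :=
  lin1_mx (fun v => dfl q (vec_mx v)).

Lemma rank_eq (q : 'M[R]_(n, d)) : (forall e, xe q e != 0) ->
  rigidity_rank C ends q = \rank (Amx q).
Proof.
move=> hq; have [_ eq] := fGC_d' hq.
by rewrite /rigidity_rank /Amx eq.
Qed.

Lemma Amx_entry q i e : Amx q i e =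
  N (xe q e) * dotv (g (xe q e)) (xe (vec_mx (delta_mx 0 i)) e).
Proof. by rewrite /Amx mxE /dfl mxE. Qed.

Lemma xe_cvgp (p : 'M[R]_(n, d)) e : (fun q => xe q e) @ p --> xe p e.
Proof.
apply: (@lip_cvg R _ _ _ 2) => y; rewrite -xeB; exact: xe_norm.
Qed.

Lemma Amx_cvg (p : 'M[R]_(n, d)) i e : xe p e != 0 ->
  (fun q => Amx q i e) @ p --> Amx p i e.
Proof.
move=> hp.
rewrite Amx_entry; under eq_cvg do rewrite Amx_entry.
have h1 : (fun q => N (xe q e)) @ p --> N (xe p e).
  apply: (@lip_cvg R _ R^o _ (L * 2) p) => y.
  rewrite (le_trans (N_lip' _ _)) // -xeB -mulrA.
  have := xe_norm ends (y - p) e; have := L0 d rho0; nra.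
set w := xe (vec_mx (delta_mx 0 i)) e.
have h2 : (fun q => dotv (g (xe q e)) w) @ p --> dotv (g (xe p e)) w.
  apply: (@cvg_comp _ _ _ (fun q => xe q e) (fun x => dotv (g x) w) _ (nbhs (xe p e))).
    exact: xe_cvgp.
  apply: (@cvg_comp _ _ _ g (fun u => dotv u w) _ (nbhs (g (xe p e)))).
    exact: g_cont'.
  apply: (@lip_cvg R _ R^o (fun u => dotv u w) (d%:R * `|w|)) => u.
  rewrite -dotvBl (le_trans (dotv_bound _ _)) //.
  by rewrite mulrAC.
exact: (@cvgM _ _ (nbhs p) _ _ _ _ _ h1 h2).
Qed.

Lemma ebase_inv a b (A : 'M[R]_(a, b)) :
  let r := \rank A in
  (pid_mx r *m invmx (col_ebase A) : 'M[R]_(r, a)) *m A *m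
  (invmx (row_ebase A) *m pid_mx r : 'M[R]_(b, r)) = 1%:M.
Proof.
move=> r.
rewrite -{2}(mulmx_ebase A) -/r.
rewrite !mulmxA -(mulmxA _ (invmx (col_ebase A))) mulVmx ?col_ebase_unit // mulmx1.
rewrite -(mulmxA _ (row_ebase A)) mulmxV ?row_ebase_unit // mulmx1.
rewrite pid_mx_id ?rank_leq_row // pid_mx_id ?rank_leq_col //.
exact: pid_mx_1.
Qed.

Lemma rank_lsc (p : 'M[R]_(n, d)) : (forall e, xe p e != 0) ->
  \forall q \near p, (\rank (Amx p) <= \rank (Amx q))%N.
Proof.
move=> hp.
set A := Amx p; set r := \rank A.
set X := (pid_mx r *m invmx (col_ebase A) : 'M[R]_(r, n * d)).
set Y := (invmx (row_ebase A) *m pid_mx r : 'M[R]_(m, r)).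
have XAY : X *m A *m Y = 1%:M by exact: ebase_inv.
have hc : (fun q => \det (X *m Amx q *m Y)) @ p --> \det (X *m A *m Y).
  apply: (@det_cvg R _ (nbhs p) _) => i j.
  apply: (@mx3_cvg R _ (nbhs p) _) => k l; exact: Amx_cvg (hp _).
rewrite XAY det1 in hc.
near=> q.
have hq : `|1 - \det (X *m Amx q *m Y)| < 1.
  near: q; exact: (@cvgr_dist_lt _ _ _ (nbhs p) _ _ _ hc 1 ltr01).
have dq : \det (X *m Amx q *m Y) != 0.
  apply/eqP => h0; move: hq; rewrite h0 subr0 normr1 ltxx //.
have : \rank (X *m Amx q *m Y) = r.
  by apply: mxrank_unit; rewrite unitmxE unitfE.
move=> <-.
apply: (leq_trans (mxrankM_maxl _ _)).
exact: mxrankM_maxr.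
Unshelve. all: by end_near.
Qed.

End Final.

Unset Implicit Arguments.

Theorem proposition2p6 (R : realType) (d n m : nat) (C : set 'rV[R]_d)
    (ends : 'I_m -> 'I_n * 'I_n) (p : 'M[R]_(n, d)) :
  cs_convex_body C -> smooth_body C -> simple_graph ends ->
  regular C ends p -> constant_fw C ends p.
Proof.
move=> hC hS _ [[wp_rows _] maxr].
have [rho rho0 hrho] := ball0_in hC.
have [B B0 hB] := bounded_C hC.
have hp : forall e, xe ends p e != 0.
  by move=> e; rewrite /xe subr_eq0; exact: wp_rows.
have near_ne : \forall q \near p, forall e, xe ends q e != 0.
  apply: (@filter_forall _ _ _ (nbhs p) _) => e.
  have e0 : 0 < `|xe ends p e| by rewrite normr_gt0.
  have h := @cvgr_dist_lt _ _ _ (nbhs p) _ _ _ (@xe_cvgp R d n m ends p e) _ e0.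
  near=> q.
  have hq : `|xe ends p e - xe ends q e| < `|xe ends p e| by near: q; exact: h.
  apply/eqP => h0; move: hq; rewrite h0 subr0 ltxx //.
have hl := rank_lsc hC hS rho0 hrho B0 hB hp.
near=> q.
have hq : forall e, xe ends q e != 0 by near: q.
have lq : (\rank (Amx C ends p) <= \rank (Amx C ends q))%N by near: q.
have wq : well_positioned C ends q.
  split; first by move=> e; rewrite -subr_eq0; exact: hq.
  exact: (fGC_d hC hS rho0 hrho B0 hB hq).1.
split; first exact: wq.
have := maxr q wq.
rewrite (rank_eq hC hS rho0 hrho B0 hB hq) (rank_eq hC hS rho0 hrho B0 hB hp) => h.
by apply/eqP; rewrite eqn_leq h lq.
Unshelve. all: by end_near.
Qed.
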